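(* Consider a discounted MDP with finite state space $\mathcal{S}$, finite action space $\mathcal{A}$, reward vector $r$, transition matrix $P$ with $P_{sa,\tilde s}=\Pr(\tilde s\mid s,a)$, initial state distribution $\mu_0$ with full support, and discount $\gamma\in[0,1)$. Let $\theta\mapsto\pi_\theta$ be a differentiable parametrized policy with $\pi_\theta(s,a)>0$ for all $(s,a)$, and let the critic be directly parametrized by $q\in\mathbb{R}^{|\mathcal{S}||\mathcal{A}|}$. Let $\Psi_\theta=I-\gamma P\Pi_\theta$, $D_\theta=\Delta(d_\theta)$, $\delta_\theta=r-\Psi_\theta q$ and $J_\pi(\theta,q)=(1-\gamma)\mu_0^\top\Pi_\theta q$. Define the semi-gradient quantities: $\partial_q^{\mathrm{semi}}J_q=-D_\theta\delta_\theta$ (a function of $(\theta,q)$); the semi-Hessian $(\partial_q^{\mathrm{semi}})^2J_q=D_\theta$; the semi-derivative $\partial_q^{\mathrm{semi}}J_\pi=d_\theta$; and let $\partial_\theta\partial_q^{\mathrm{semi}}J_q$ be the Jacobian in $\theta$ of $-D_\theta\delta_\theta$ at fixed $q$ (derivative through both $D_\theta$ and $\delta_\theta$). Define $$g^{\mathrm{semi}}_{S,\theta}=\partial_\theta J_\pi-(\partial_\theta\partial_q^{\mathrm{semi}}J_q)^\top\big((\partial_q^{\mathrm{semi}})^2J_q\big)^{-1}(\partial_q^{\mathrm{semi}}J_\pi).$$ Then for every $q$, $g^{\mathrm{semi}}_{S,\theta}=\partial_\theta J_\pi+\nabla_\theta(d_\theta^\top\delta_\theta)=\nabla_\theta J(\theta)$,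 where $J(\theta)=(1-\gamma)\mu_0^\top\Pi_\theta q_\theta$.
   Context: $\pi_\theta\in\mathbb{R}_+^{|\mathcal{S}||\mathcal{A}|}$ has entries $\pi_\theta(s,a)$, normalized in each state. $\Pi_\theta\in\mathbb{R}^{|\mathcal{S}|\times|\mathcal{S}||\mathcal{A}|}$ is block-diagonal with row $s$ containing $\pi_\theta(s,\cdot)^\top$, so $(\Pi_\theta v)(s)=\sum_a\pi_\theta(s,a)v(s,a)$. $q_\theta=\sum_{i\ge0}(\gamma P\Pi_\theta)^i r$. $d_\theta(s,a)=(1-\gamma)\sum_{i\ge0}\gamma^i\Pr(S_i=s,A_i=a)$ is the discounted state-action visitation distribution under $S_0\sim\mu_0$, policy $\pi_\theta$ and transitions $P$; $\Delta(v)$ is the diagonal matrix with diagonal $v$. $\partial_\theta J_\pi$ is the gradient of $J_\pi$ in $\theta$ at fixed $q$. (The semi-gradient quantities arise from the on-policy critic loss $\tfrac12\|r+\gamma P\Pi_\theta q-q\|^2_{d_\theta}$ and the identity $J_\pi=d_\theta^\top(q-q')$, $q'=r+\gamma P\Pi_\theta q$, by not differentiating through the target $q'$.) *)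

(* Defs.v *)
From HB Require Import structures.
From mathcomp Require Import all_boot all_order all_algebra.
From mathcomp Require Import all_classical all_reals all_analysis.
Set Implicit Arguments. Unset Strict Implicit. Unset Printing Implicit Defensive.
Import Order.TTheory GRing.Theory Num.Theory.
Import numFieldNormedType.Exports.
Local Open Scope ring_scope.

(* Vectors in R^{|S||A|} are represented as functions S -> A -> R,
   vectors in R^{|S|} as functions S -> R.
   P s a s' = Pr(s' | s, a);  pi s a = pi(s,a). *)

Section MDP.
Variables (R : realType) (S A : finType).

Definition PiOp (pi : S -> A -> R) (v : S -> A -> R) : S -> R :=
  fun s => \sum_(a : A) pi s a * v s a.

Definition POp (P : S -> A -> S -> R) (w : S -> R) : S -> A -> R :=
  fun s a => \sum_(s' : S) P s a s' * w s'.

Definition gPPi (gamma : R) (P : S -> A -> S -> R) (pi : S -> A -> R)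
  (v : S -> A -> R) : S -> A -> R :=
  fun s a => gamma * POp P (PiOp pi v) s a.

Definition qval (gamma : R) (P : S -> A -> S -> R) (pi : S -> A -> R)
  (r : S -> A -> R) : S -> A -> R :=
  fun s a => limn (series (fun i => iter i (gPPi gamma P pi) r s a)).

Fixpoint stateDist (mu0 : S -> R) (P : S -> A -> S -> R) (pi : S -> A -> R)
  (i : nat) : S -> R :=
  match i with
  | 0 => mu0
  | i'.+1 => fun s' => \sum_(s : S) \sum_(a : A)
      stateDist mu0 P pi i' s * pi s a * P s a s'
  end.

Definition saProb (mu0 : S -> R) (P : S -> A -> S -> R) (pi : S -> A -> R)
  (i : nat) (s : S) (a : A) : R := stateDist mu0 P pi i s * pi s a.

Definition dvis (gamma : R) (mu0 : S -> R) (P : S -> A -> S -> R)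
  (pi : S -> A -> R) : S -> A -> R :=
  fun s a => (1 - gamma) *
    limn (series (fun i => gamma ^+ i * saProb mu0 P pi i s a)).

Definition tdres (gamma : R) (P : S -> A -> S -> R) (pi : S -> A -> R)
  (r q : S -> A -> R) : S -> A -> R :=
  fun s a => r s a - (q s a - gPPi gamma P pi q s a).

Definition Jpi (gamma : R) (mu0 : S -> R) (pi : S -> A -> R)
  (q : S -> A -> R) : R :=
  (1 - gamma) * \sum_(s : S) mu0 s * PiOp pi q s.

End MDP.

Definition ebasis (R : realType) (k : nat) (i : 'I_k) : 'rV[R]_k := delta_mx 0 i.

(* Main.v *)
Require Import Defs.
From HB Require Import structures.
From mathcomp Require Import all_boot all_order all_algebra.
From mathcomp Require Import all_classical all_reals all_analysis.
From mathcomp Require Import ring lra.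
Import Order.TTheory GRing.Theory Num.Theory.
Import numFieldNormedType.Exports.
Local Open Scope classical_set_scope.
Local Open Scope ring_scope.

Section Helpers.
Variable R : realType.

Lemma cvg_sumF (I : Type) (r : seq I) (u : I -> nat -> R) (l : I -> R) :
  (forall i, (fun n => u i n) @ \oo --> l i) ->
  (fun n => \sum_(i <- r) u i n) @ \oo --> \sum_(i <- r) l i.
Proof.
move=> H; elim: r => [|i r IH].
  rewrite big_nil; under eq_cvg do rewrite big_nil; exact: cvg_cst.
rewrite big_cons; under eq_cvg do rewrite big_cons.
exact: cvgD.
Qed.

Lemma cvg_uniq (u : nat -> R) (l1 l2 : R) :
  u @ \oo --> l1 -> u @ \oo --> l2 -> l1 = l2.
Proof. by move=> h1 h2; rewrite -(cvg_lim _ h1) // -(cvg_lim _ h2). Qed.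

Lemma cvg_scal (u : nat -> R) (c l : R) :
  u @ \oo --> l -> (fun n => c * u n) @ \oo --> c * l.
Proof. by move=> h; apply: cvgMl_tmp. Qed.

Variables (k : nat) (x v : 'rV[R]_k).
Implicit Types f g : 'rV[R]_k -> R.

Lemma dcst (c : R) : derivable (fun _ : 'rV[R]_k => c) x v.
Proof. exact: derivable_cst. Qed.
Lemma dM f g : derivable f x v -> derivable g x v -> derivable (fun y => f y * g y) x v.
Proof. move=> ? ?. exact: derivableM. Qed.
Lemma dAdd f g : derivable f x v -> derivable g x v -> derivable (fun y => f y + g y) x v.
Proof. move=> ? ?. exact: derivableD. Qed.
Lemma dOpp f : derivable f x v -> derivable (fun y => - f y) x v.
Proof. move=> ?. exact: derivableN. Qed.
Lemma dInv f : f x != 0 -> derivable f x v -> derivable (fun y => (f y)^-1) x v.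
Proof. move=> ? ?. exact: derivableV. Qed.
Lemma DOpp f : derivable f x v -> derive (fun y => - f y) x v = - derive f x v.
Proof. move=> ?. exact: deriveN. Qed.
Lemma DAdd f g : derivable f x v -> derivable g x v -> derive (fun y => f y + g y) x v = derive f x v + derive g x v.
Proof. move=> ? ?. exact: deriveD. Qed.

Lemma dsum (I : Type) (r : seq I) (P : pred I) (F : I -> 'rV[R]_k -> R) :
  (forall i, P i -> derivable (F i) x v) ->
  derivable (fun y => \sum_(i <- r | P i) F i y) x v.
Proof.
move=> H; elim: r => [|i r IH].
  have -> : (fun y => \sum_(i <- [::] | P i) F i y) = (fun _ => 0).
    by apply/funext => y; rewrite big_nil.
  exact: dcst.
have -> : (fun y => \sum_(j <- i :: r | P j) F j y) =
   (fun y => if P i then F i y + \sum_(j <- r | P j) F j y else \sum_(j <- r | P j) F j y).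
  by apply/funext => y; rewrite big_cons.
case: (boolP (P i)) => Pi; last by [].
by apply: dAdd => //; apply: H.
Qed.

Lemma dprod (I : Type) (r : seq I) (P : pred I) (F : I -> 'rV[R]_k -> R) :
  (forall i, P i -> derivable (F i) x v) ->
  derivable (fun y => \prod_(i <- r | P i) F i y) x v.
Proof.
move=> H; elim: r => [|i r IH].
  have -> : (fun y => \prod_(i <- [::] | P i) F i y) = (fun _ => 1).
    by apply/funext => y; rewrite big_nil.
  exact: dcst.
have -> : (fun y => \prod_(j <- i :: r | P j) F j y) =
   (fun y => if P i then F i y * \prod_(j <- r | P j) F j y else \prod_(j <- r | P j) F j y).
  by apply/funext => y; rewrite big_cons.
case: (boolP (P i)) => Pi; last by [].
by apply: dM => //; apply: H.
Qed.

End Helpers.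

Section H2s.
Variable R : realType.
Variables (k : nat) (x v : 'rV[R]_k).
Lemma Dsum (I : Type) (r : seq I) (F : I -> 'rV[R]_k -> R) :
  (forall i, derivable (F i) x v) ->
  derive (fun y => \sum_(i <- r) F i y) x v = \sum_(i <- r) derive (F i) x v.
Proof.
move=> H; elim: r => [|i r IH].
  have -> : (fun y => \sum_(i <- [::]) F i y) = (fun _ => 0).
    by apply/funext => y; rewrite big_nil.
  by rewrite big_nil; exact: derive_cst.
have -> : (fun y => \sum_(j <- i :: r) F j y) =
   (fun y => F i y + \sum_(j <- r) F j y).
  by apply/funext => y; rewrite big_cons.
rewrite big_cons -IH.
apply: (@DAdd R k x v (F i) (fun y => \sum_(j <- r) F j y)); first exact: H.
by apply: dsum => j _; apply: H.
Qed.
Lemma ddet n (F : 'rV[R]_k -> 'M[R]_n) :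
  (forall i j, derivable (fun y => F y i j) x v) ->
  derivable (fun y => \det (F y)) x v.
Proof.
move=> H; rewrite /determinant.
apply: dsum => s _; apply: dM; first exact: dcst.
by apply: dprod => i _; apply: H.
Qed.

End H2s.

Section Alg.
Variables (R : realType) (S A : finType) (P : S -> A -> S -> R) (mu0 : S -> R) (gamma : R).
Hypothesis HP0 : forall s a s', 0 <= P s a s'.
Hypothesis HP1 : forall s a, \sum_(s' : S) P s a s' = 1.
Hypothesis Hmu0 : forall s, 0 <= mu0 s.
Hypothesis Hmu1 : \sum_(s : S) mu0 s = 1.
Hypothesis hg0 : 0 <= gamma.
Hypothesis hg1 : gamma < 1.
Variable p : S -> A -> R.
Hypothesis hp0 : forall s a, 0 <= p s a.
Hypothesis hp1 : forall s, \sum_(a : A) p s a = 1.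

Local Notation rho := (stateDist mu0 P p).

Lemma rho_ge0 i s : 0 <= rho i s.
Proof.
elim: i s => [|i IH] s /=; first exact: Hmu0.
apply: sumr_ge0 => s0 _; apply: sumr_ge0 => a _.
by rewrite !mulr_ge0.
Qed.

Lemma rho_sum i : \sum_(s : S) rho i s = 1.
Proof.
elim: i => [|i IH] /=; first exact: Hmu1.
rewrite exchange_big /= -IH; apply: eq_bigr => s _.
rewrite exchange_big /= -[RHS]mulr1 -(hp1 s) mulr_sumr; apply: eq_bigr => a _.
by rewrite -mulr_sumr HP1 mulr1.
Qed.

Lemma rho_le1 i s : rho i s <= 1.
Proof.
rewrite -(rho_sum i) (bigD1 s) //= lerDl sumr_ge0 // => s0 _; exact: rho_ge0.
Qed.

Definition Ev i (v : S -> A -> R) := \sum_(s : S) \sum_(a : A) rho i s * p s a * v s a.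

Lemma Ev_G i v : Ev i (gPPi gamma P p v) = gamma * Ev i.+1 v.
Proof.
rewrite /Ev /gPPi /POp /PiOp /=.
transitivity (\sum_(s : S) \sum_(a : A) \sum_(s' : S) \sum_(a' : A)
   gamma * (rho i s * p s a * P s a s' * p s' a' * v s' a')).
  apply: eq_bigr => s _; apply: eq_bigr => a _.
  rewrite mulr_sumr mulr_sumr; apply: eq_bigr => s' _.
  rewrite !mulr_sumr; apply: eq_bigr => a' _; ring.
transitivity (\sum_(s' : S) \sum_(a' : A) \sum_(s : S) \sum_(a : A)
   gamma * (rho i s * p s a * P s a s' * p s' a' * v s' a')); last first.
  rewrite mulr_sumr; apply: eq_bigr => s' _; rewrite mulr_sumr; apply: eq_bigr => a' _.
  rewrite !mulr_suml mulr_sumr; apply: eq_bigr => s _.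
  rewrite !mulr_suml mulr_sumr; apply: eq_bigr => a _; ring.
transitivity (\sum_(s : S) \sum_(s' : S) \sum_(a : A) \sum_(a' : A)
   gamma * (rho i s * p s a * P s a s' * p s' a' * v s' a')).
  by apply: eq_bigr => s _; rewrite exchange_big.
rewrite exchange_big /=; apply: eq_bigr => s' _.
transitivity (\sum_(s : S) \sum_(a' : A) \sum_(a : A)
   gamma * (rho i s * p s a * P s a s' * p s' a' * v s' a')).
  by apply: eq_bigr => s _; rewrite exchange_big.
by rewrite exchange_big.
Qed.

Lemma gabs : `|gamma| < 1.
Proof. by rewrite ger0_norm. Qed.

Lemma cvg_rb s : cvgn (series (fun i => gamma ^+ i * rho i s)).
Proof.
apply: (@series_le_cvg R _ (geometric 1 gamma)).
- by move=> n; rewrite mulr_ge0 ?exprn_ge0 ?rho_ge0.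
- by move=> n; apply: geometric_ge0.
- move=> n /=; rewrite mul1r -[leRHS]mulr1 ler_wpM2l ?exprn_ge0 //; exact: rho_le1.
- exact: is_cvg_geometric_series gabs.
Qed.

Definition rb s := limn (series (fun i => gamma ^+ i * rho i s)).

Lemma rb_cvg s : series (fun i => gamma ^+ i * rho i s) @ \oo --> rb s.
Proof. exact: cvg_rb. Qed.

Lemma dvis_eq s a : dvis gamma mu0 P p s a = (1 - gamma) * (p s a * rb s).
Proof.
rewrite /dvis /saProb; congr (_ * _).
have -> : series (fun i => gamma ^+ i * (rho i s * p s a)) =
   (fun n => p s a * series (fun i => gamma ^+ i * rho i s) n).
  apply/funext => n; rewrite !seriesEnat /= mulr_sumr.
  by apply: eq_bigr => i _; ring.
apply: cvg_lim => //; apply: cvg_scal; exact: rb_cvg.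
Qed.

Lemma rb_ge s : mu0 s <= rb s.
Proof.
have := @nondecreasing_cvgn_le R (series (fun i => gamma ^+ i * rho i s)).
move=> /(_ _ (cvg_rb s) 1%N).
rewrite seriesEnat /= big_nat1 expr0 mul1r; apply.
move=> n m nm; move: n m nm; apply: (nondecreasing_series (P := predT) (m := 0%N)) => n _ _; rewrite mulr_ge0 ?exprn_ge0 ?rho_ge0 //.
Qed.

Lemma rb_fix s' : rb s' = mu0 s' + gamma * \sum_(s : S) rb s * \sum_(a : A) p s a * P s a s'.
Proof.
have e : forall n, series (fun i => gamma ^+ i * rho i s') n.+1 =
   mu0 s' + gamma * \sum_(s : S) series (fun i => gamma ^+ i * rho i s) n * \sum_(a : A) p s a * P s a s'.
  move=> n; rewrite seriesEnat /= big_nat_recl // expr0 mul1r; congr (_ + _).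
  under [in RHS]eq_bigr do rewrite seriesEnat /= mulr_suml.
  rewrite mulr_sumr; under [in RHS]eq_bigr do rewrite mulr_sumr.
  rewrite [in RHS]exchange_big /=; apply: eq_bigr => i _.
  rewrite /= exprS mulr_sumr; apply: eq_bigr => s _.
  rewrite mulr_sumr mulr_sumr mulr_sumr; apply: eq_bigr => a _; ring.
have h1 : (fun n => series (fun i => gamma ^+ i * rho i s') n.+1) @ \oo --> rb s'.
  by have := rb_cvg s'; rewrite -cvg_shiftS.
apply: (@cvg_uniq R _ _ _ h1).
have -> : (fun n => series (fun i => gamma ^+ i * rho i s') n.+1) =
  (fun n => mu0 s' + gamma * \sum_(s : S) series (fun i => gamma ^+ i * rho i s) n * \sum_(a : A) p s a * P s a s').
  by apply/funext => n; rewrite e.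
apply: cvgD; first exact: cvg_cst.
apply: cvg_scal; apply: cvg_sumF => s; apply: cvgMr_tmp; exact: rb_cvg.
Qed.

Lemma d_tel v : \sum_(s : S) \sum_(a : A) dvis gamma mu0 P p s a * (v s a - gPPi gamma P p v s a)
  = (1 - gamma) * \sum_(s : S) mu0 s * PiOp p v s.
Proof.
pose w := fun s a => v s a - gPPi gamma P p v s a.
transitivity ((1 - gamma) * \sum_(s : S) rb s * \sum_(a : A) p s a * w s a).
  rewrite mulr_sumr; apply: eq_bigr => s _; rewrite mulr_sumr mulr_sumr.
  by apply: eq_bigr => a _; rewrite dvis_eq /w; ring.
congr (_ * _).
have Ew : forall i, Ev i w = Ev i v - gamma * Ev i.+1 v.
  move=> i; rewrite -Ev_G /Ev -sumrB; apply: eq_bigr => s _; rewrite -sumrB.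
  by apply: eq_bigr => a _; rewrite /w; ring.
have T : forall n, \sum_(s : S) series (fun i => gamma ^+ i * rho i s) n * \sum_(a : A) p s a * w s a
    = Ev 0 v - gamma ^+ n * Ev n v.
  move=> n; transitivity (\sum_(0 <= k < n) gamma ^+ k * Ev k w).
    under eq_bigr do rewrite seriesEnat /= mulr_suml.
    rewrite exchange_big /=; apply: eq_bigr => k _; rewrite /Ev mulr_sumr.
    apply: eq_bigr => s _; rewrite mulr_sumr mulr_sumr; apply: eq_bigr => a _; ring.
  under eq_bigr do rewrite Ew.
  rewrite (@telescope_sumr_eq _ 0 n (fun k => - (gamma ^+ k * Ev k v))) //.
    by rewrite expr0; ring.
  by move=> k _; rewrite exprS; ring.
have h1 : (fun n => \sum_(s : S) series (fun i => gamma ^+ i * rho i s) n * \sum_(a : A) p s a * w s a)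
   @ \oo --> \sum_(s : S) rb s * \sum_(a : A) p s a * w s a.
  by apply: cvg_sumF => s; apply: cvgMr_tmp; exact: rb_cvg.
apply: (@cvg_uniq R _ _ _ h1).
have -> : (fun n => \sum_(s : S) series (fun i => gamma ^+ i * rho i s) n * \sum_(a : A) p s a * w s a)
   = (fun n => Ev 0 v - gamma ^+ n * Ev n v) by apply/funext => n; rewrite T.
have -> : \sum_(s : S) mu0 s * PiOp p v s = Ev 0 v - 0.
  rewrite subr0 /Ev /PiOp; apply: eq_bigr => s _; rewrite mulr_sumr.
  by apply: eq_bigr => a _ /=; ring.
apply: cvgB; first exact: cvg_cst.
have -> : (fun n => gamma ^+ n * Ev n v) =
   (fun n => \sum_(s : S) \sum_(a : A) (gamma ^+ n * rho n s) * (p s a * v s a)).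
  apply/funext => n; rewrite /Ev mulr_sumr; apply: eq_bigr => s _.
  by rewrite mulr_sumr; apply: eq_bigr => a _; ring.
have h : (fun n => \sum_(s : S) \sum_(a : A) (gamma ^+ n * rho n s) * (p s a * v s a)) @ \oo -->
    \sum_(s : S) \sum_(a : A) 0 * (p s a * v s a).
  apply: cvg_sumF => s; apply: cvg_sumF => a; apply: cvgMr_tmp.
  exact: (cvg_series_cvg_0 (cvg_rb s)).
have z : \sum_(s : S) \sum_(a : A) 0 * (p s a * v s a) = 0 :> R.
  by rewrite big1 // => s _; rewrite big1 // => a _; rewrite mul0r.
by rewrite z in h.
Qed.

Lemma G_bound c v : (forall s a, `|v s a| <= c) ->
  forall s a, `|gPPi gamma P p v s a| <= gamma * c.
Proof.
move=> hv s a; rewrite /gPPi /POp /PiOp normrM ger0_norm // ler_wpM2l //.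
apply: le_trans (ler_norm_sum _ _ _) _.
rewrite -[leRHS]mul1r -(HP1 s a) mulr_suml; apply: ler_sum => s' _.
rewrite normrM ger0_norm // ler_wpM2l //.
apply: le_trans (ler_norm_sum _ _ _) _.
rewrite -[leRHS]mul1r -(hp1 s') mulr_suml; apply: ler_sum => a' _.
by rewrite normrM ger0_norm // ler_wpM2l.
Qed.

Lemma iter_bound (r : S -> A -> R) i s a :
  `|iter i (gPPi gamma P p) r s a| <= gamma ^+ i * \sum_(s0 : S) \sum_(a0 : A) `|r s0 a0|.
Proof.
elim: i s a => [|i IH] s a /=.
  rewrite expr0 mul1r (bigD1 s) //= (bigD1 a) //= -addrA lerDl.
  by rewrite addr_ge0 ?sumr_ge0 // => s0 _; rewrite sumr_ge0.
by rewrite exprS -mulrA; apply: G_bound.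
Qed.

Lemma cvg_q (r : S -> A -> R) s a : cvgn (series (fun i => iter i (gPPi gamma P p) r s a)).
Proof.
apply: normed_cvg.
apply: (@series_le_cvg R _ (geometric (\sum_(s0 : S) \sum_(a0 : A) `|r s0 a0|) gamma)).
- by move=> n /=; rewrite normr_ge0.
- move=> n; apply: geometric_ge0 => //.
  by apply: sumr_ge0 => s0 _; apply: sumr_ge0.
- by move=> n /=; rewrite mulrC; apply: iter_bound.
- exact: is_cvg_geometric_series gabs.
Qed.

Lemma G_lin (F : nat -> S -> A -> R) n s a :
  gPPi gamma P p (fun s a => \sum_(0 <= i < n) F i s a) s a =
  \sum_(0 <= i < n) gPPi gamma P p (F i) s a.
Proof.
rewrite /gPPi /POp /PiOp.
under eq_bigr do under eq_bigr do rewrite mulr_sumr.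
under eq_bigr do rewrite exchange_big /= mulr_sumr.
rewrite exchange_big /= mulr_sumr; apply: eq_bigr => i _.
by rewrite mulr_sumr.
Qed.

Lemma G_cvg (u : nat -> S -> A -> R) (l : S -> A -> R) :
  (forall s a, (fun n => u n s a) @ \oo --> l s a) ->
  forall s a, (fun n => gPPi gamma P p (u n) s a) @ \oo --> gPPi gamma P p l s a.
Proof.
move=> h s a; rewrite /gPPi /POp /PiOp.
apply: cvg_scal; apply: cvg_sumF => s'; apply: cvgMl_tmp.
apply: cvg_sumF => a'; apply: cvgMl_tmp; exact: h.
Qed.

Lemma bellman (r : S -> A -> R) s a :
  qval gamma P p r s a = r s a + gPPi gamma P p (qval gamma P p r) s a.
Proof.
have hq : forall s a, series (fun i => iter i (gPPi gamma P p) r s a) @ \oo --> qval gamma P p r s a.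
  by move=> s0 a0; exact: cvg_q.
have h1 := hq s a; rewrite -cvg_shiftS in h1.
apply: (@cvg_uniq R _ _ _ h1).
have -> : (fun n => series (fun i => iter i (gPPi gamma P p) r s a) n.+1) =
  (fun n => r s a + gPPi gamma P p (fun s a => series (fun i => iter i (gPPi gamma P p) r s a) n) s a).
  apply/funext => n; rewrite seriesEnat /= big_nat_recl //; congr (_ + _).
  have -> : (fun s0 a0 => series (fun i => iter i (gPPi gamma P p) r s0 a0) n) =
     (fun s0 a0 => \sum_(0 <= i < n) iter i (gPPi gamma P p) r s0 a0).
    by apply/funext => s0; apply/funext => a0; rewrite seriesEnat.
  by rewrite G_lin.
apply: cvgD; first exact: cvg_cst.
exact: (@G_cvg (fun n s a => series (fun i => iter i (gPPi gamma P p) r s a) n) _ hq s a).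
Qed.

Lemma key (q r : S -> A -> R) :
  (1 - gamma) * \sum_(s : S) mu0 s * PiOp p (qval gamma P p r) s =
  Jpi gamma mu0 p q + \sum_(s : S) \sum_(a : A) dvis gamma mu0 P p s a * tdres gamma P p r q s a.
Proof.
rewrite /Jpi -!d_tel -big_split; apply: eq_bigr => s _ /=.
rewrite -big_split; apply: eq_bigr => a _ /=.
have hb := bellman r s a.
rewrite /tdres hb; ring.
Qed.

Lemma rb_pos s : 0 < mu0 s -> 0 < rb s.
Proof. by move=> h; apply: lt_le_trans h (rb_ge s). Qed.

Lemma reidx (F : S -> R) : \sum_(s : S) F s = \sum_(j < #|S|) F (enum_val j).
Proof. by rewrite (reindex (fun j : 'I_#|S| => enum_val j)) //; apply: onW_bij; exact: enum_val_bij. Qed.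

Definition Mx : 'M[R]_#|S| :=
  \matrix_(i, j) \sum_(a : A) p (enum_val i) a * P (enum_val i) a (enum_val j).
Definition Bm : 'M[R]_#|S| := 1%:M - gamma *: Mx.

Lemma Mx_ge0 i j : 0 <= Mx i j.
Proof. by rewrite mxE sumr_ge0 // => a _; rewrite mulr_ge0. Qed.

Lemma Mx_row i : \sum_j Mx i j = 1.
Proof.
under eq_bigr do rewrite mxE.
rewrite -(reidx (fun s' => \sum_(a : A) p (enum_val i) a * P (enum_val i) a s')).
rewrite exchange_big /= -(hp1 (enum_val i)); apply: eq_bigr => a _.
by rewrite -mulr_sumr HP1 mulr1.
Qed.

Lemma Bm_kill (x : 'rV[R]_#|S|) : x *m Bm = 0 -> x = 0.
Proof.
move=> hx.
have ex : x = gamma *: (x *m Mx).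
  by apply/eqP; rewrite -subr_eq0 scalemxAr -[x in x - _]mulmx1 -mulmxBr hx.
set N := \sum_j `|x 0 j|.
have hN : N <= gamma * N.
  have exj : forall j, x 0 j = gamma * \sum_i x 0 i * Mx i j.
    by move=> j; rewrite {1}ex !mxE.
  apply: (@le_trans _ _ (\sum_j (gamma * \sum_i `|x 0 i| * Mx i j))).
    apply: ler_sum => j _; rewrite exj normrM ger0_norm // ler_wpM2l //.
    apply: le_trans (ler_norm_sum _ _ _) _; apply: ler_sum => i _.
    by rewrite normrM (ger0_norm (Mx_ge0 i j)).
  rewrite -mulr_sumr ler_wpM2l // exchange_big /= (eq_bigr (fun i => `|x 0 i|)) //.
  by move=> i _; rewrite -mulr_sumr Mx_row mulr1.
have N0 : N = 0.
  have Nge : 0 <= N by apply: sumr_ge0.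
  have : (1 - gamma) * N <= 0 by rewrite mulrBl mul1r subr_le0.
  rewrite pmulr_rle0 ?subr_gt0 // => h; apply/eqP; rewrite eq_le h Nge.
  done.
apply/rowP => j; rewrite mxE; apply/eqP; rewrite -normr_eq0 eq_le normr_ge0 andbT -N0.
by rewrite /N (bigD1 j) //= lerDl sumr_ge0.
Qed.

Lemma Bm_unit : Bm \in unitmx.
Proof.
rewrite -row_free_unit -kermx_eq0; apply/eqP/row_matrixP => i.
rewrite row0; apply: Bm_kill.
by rewrite -row_mul mulmx_ker row0.
Qed.

Lemma X_eq : (\row_j rb (enum_val j)) *m Bm = \row_j mu0 (enum_val j).
Proof.
apply/rowP => j; rewrite mulmxBr mulmx1 -scalemxAr !mxE (rb_fix (enum_val j)).
rewrite (reidx (fun s => rb s * \sum_(a : A) p s a * P s a (enum_val j))).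
set T := \sum_(i < #|S|) _.
suff -> : \sum_j0 (\row_j1 rb (enum_val j1)) 0 j0 * Mx j0 j = T by ring.
by apply: eq_bigr => i _; rewrite !mxE.
Qed.

Lemma rb_formula s : rb s = \sum_(i < #|S|) mu0 (enum_val i) *
   ((\det Bm)^-1 * \adj Bm i (enum_rank s)).
Proof.
have h : \row_j rb (enum_val j) = (\row_j mu0 (enum_val j)) *m invmx Bm.
  by rewrite -X_eq mulmxK // Bm_unit.
have := congr1 (fun M : 'rV[R]_#|S| => M 0 (enum_rank s)) h.
rewrite /= !mxE enum_rankK => ->; apply: eq_bigr => i _.
by rewrite /invmx Bm_unit !mxE.
Qed.

End Alg.

Section Deriv.
Variables (R : realType) (S A : finType) (P : S -> A -> S -> R) (mu0 : S -> R) (gamma : R).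
Hypothesis HP0 : forall s a s', 0 <= P s a s'.
Hypothesis HP1 : forall s a, \sum_(s' : S) P s a s' = 1.
Hypothesis Hmu0 : forall s, 0 <= mu0 s.
Hypothesis Hmu1 : \sum_(s : S) mu0 s = 1.
Hypothesis hg0 : 0 <= gamma.
Hypothesis hg1 : gamma < 1.
Variables (k : nat) (pi : 'rV[R]_k -> S -> A -> R).
Hypothesis hp0 : forall y s a, 0 <= pi y s a.
Hypothesis hp1 : forall y s, \sum_(a : A) pi y s a = 1.
Variables (th v : 'rV[R]_k).
Hypothesis dpi : forall s a, derivable (fun y => pi y s a) th v.

Lemma dBm i j : derivable (fun y => Bm R S A P gamma (pi y) i j) th v.
Proof.
have -> : (fun y => Bm R S A P gamma (pi y) i j) =
  (fun y => (1%:M : 'M[R]_#|S|) i j + - (gamma * \sum_(a : A) pi y (enum_val i) a * P (enum_val i) a (enum_val j))).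
  by apply/funext => y; rewrite /Bm /Mx !mxE.
apply: dAdd; first exact: dcst.
apply: dOpp; apply: dM; first exact: dcst.
by apply: dsum => a _; apply: dM => //; exact: dcst.
Qed.

Lemma dadj i j : derivable (fun y => \adj (Bm R S A P gamma (pi y)) i j) th v.
Proof.
have -> : (fun y => \adj (Bm R S A P gamma (pi y)) i j) =
  (fun y => (-1) ^+ (j + i) * \det (row' j (col' i (Bm R S A P gamma (pi y))))).
  by apply/funext => y; rewrite mxE.
apply: dM; first exact: dcst.
apply: ddet => a b.
have -> : (fun y => row' j (col' i (Bm R S A P gamma (pi y))) a b) =
  (fun y => Bm R S A P gamma (pi y) (lift j a) (lift i b)).
  by apply/funext => y; rewrite !mxE.
exact: dBm.
Qed.

Lemma drb s : derivable (fun y => rb R S A P mu0 gamma (pi y) s) th v.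
Proof.
have -> : (fun y => rb R S A P mu0 gamma (pi y) s) =
  (fun y => \sum_(i < #|S|) mu0 (enum_val i) *
   ((\det (Bm R S A P gamma (pi y)))^-1 * \adj (Bm R S A P gamma (pi y)) i (enum_rank s))).
  by apply/funext => y; rewrite (rb_formula _ _ _ _ _ _ HP0 HP1 Hmu0 Hmu1 hg0 hg1 _ (hp0 y) (hp1 y)).
apply: dsum => i _; apply: dM; first exact: dcst.
apply: dM; last exact: dadj.
apply: dInv.
  have := Bm_unit _ _ _ _ _ HP0 HP1 hg0 hg1 _ (hp0 th) (hp1 th).
  by rewrite unitmxE unitfE.
by apply: ddet => a b; exact: dBm.
Qed.

Lemma dd s a : derivable (fun y => dvis gamma mu0 P (pi y) s a) th v.
Proof.
have -> : (fun y => dvis gamma mu0 P (pi y) s a) =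
  (fun y => (1 - gamma) * (pi y s a * rb R S A P mu0 gamma (pi y) s)).
  by apply/funext => y; rewrite (dvis_eq _ _ _ _ _ _ HP0 HP1 Hmu0 Hmu1 hg0 hg1 _ (hp0 y) (hp1 y)).
apply: dM; first exact: dcst.
by apply: dM => //; exact: drb.
Qed.

Lemma ddelta (r q : S -> A -> R) s a : derivable (fun y => tdres gamma P (pi y) r q s a) th v.
Proof.
rewrite /tdres /gPPi /POp /PiOp.
apply: dAdd; first exact: dcst.
apply: dOpp; apply: dAdd; first exact: dcst.
apply: dOpp; apply: dM; first exact: dcst.
apply: dsum => s' _; apply: dM; first exact: dcst.
by apply: dsum => a' _; apply: dM => //; exact: dcst.
Qed.

Lemma dJ (q : S -> A -> R) : derivable (fun y => Jpi gamma mu0 (pi y) q) th v.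
Proof.
rewrite /Jpi /PiOp.
apply: dM; first exact: dcst.
apply: dsum => s _; apply: dM; first exact: dcst.
by apply: dsum => a _; apply: dM => //; exact: dcst.
Qed.

End Deriv.

Theorem mainTheorem4 (R : realType) (S A : finType) (k : nat)
  (P : S -> A -> S -> R) (r : S -> A -> R) (mu0 : S -> R) (gamma : R)
  (pi : 'rV[R]_k -> S -> A -> R) :
  (forall s a s', 0 <= P s a s') ->
  (forall s a, \sum_(s' : S) P s a s' = 1) ->
  (forall s, 0 < mu0 s) ->
  \sum_(s : S) mu0 s = 1 ->
  0 <= gamma -> gamma < 1 ->
  (forall th s a, 0 < pi th s a) ->
  (forall th s, \sum_(a : A) pi th s a = 1) ->
  (forall th s a, differentiable (fun th' => pi th' s a) th) ->
  forall (th : 'rV[R]_k) (q : S -> A -> R),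
  let d := fun th' => dvis gamma mu0 P (pi th') in
  let delta := fun th' => tdres gamma P (pi th') r q in
  (* partial_theta J_pi at fixed q *)
  let dJpi := fun i : 'I_k =>
    derive (fun th' => Jpi gamma mu0 (pi th') q) th (ebasis R i) in
  (* Jacobian in theta of -D_theta delta_theta at fixed q, entry (sa, i) *)
  let dthdqJq := fun (s : S) (a : A) (i : 'I_k) =>
    derive (fun th' => - (d th' s a * delta th' s a)) th (ebasis R i) in
  (* semi-Hessian D_theta = Delta(d_theta) (diagonal; its inverse is
     Delta(1/d_theta)); semi-derivative of J_pi is d_theta *)
  let gsemi := fun i : 'I_k =>
    dJpi i - \sum_(s : S) \sum_(a : A)
               dthdqJq s a i * ((d th s a)^-1 * d th s a) in
  let Jtrue := fun th' =>
    (1 - gamma) * \sum_(s : S) mu0 s * PiOp (pi th') (qval gamma P (pi th') r) s in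
  (forall i : 'I_k,
     gsemi i = dJpi i + derive (fun th' => \sum_(s : S) \sum_(a : A)
                                  d th' s a * delta th' s a) th (ebasis R i)) /\
  (forall i : 'I_k,
     dJpi i + derive (fun th' => \sum_(s : S) \sum_(a : A)
                        d th' s a * delta th' s a) th (ebasis R i)
     = derive Jtrue th (ebasis R i)).
Proof.
move=> HP0 HP1 Hmu Hmu1 hg0 hg1 hpi0 hpi1 hdiff th q d delta dJpi dthdqJq gsemi Jtrue.
have Hmu0 : forall s, 0 <= mu0 s by move=> s; apply: ltW.
have hp0 : forall y s a, 0 <= pi y s a by move=> y s a; apply: ltW.
have dpi : forall (v : 'rV[R]_k) s a, derivable (fun y => pi y s a) th v.
  by move=> v s a; apply: diff_derivable.
have DD : forall v s a, derivable (fun y => d y s a * delta y s a) th v.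
  move=> v s a; apply: dM.
    exact: (dd _ _ _ _ _ _ HP0 HP1 Hmu0 Hmu1 hg0 hg1 _ _ hp0 hpi1 _ _ (dpi v) s a).
  exact: (ddelta _ _ _ _ _ _ _ _ _ (dpi v) r q s a).
have DS : forall v, derivable (fun y => \sum_(s : S) \sum_(a : A) d y s a * delta y s a) th v.
  by move=> v; apply: dsum => s _; apply: dsum => a _; apply: DD.
split => i.
  rewrite /gsemi /dthdqJq.
  have -> : \sum_(s : S) \sum_(a : A) derive (fun y => - (d y s a * delta y s a)) th (ebasis R i)
        * ((d th s a)^-1 * d th s a)
      = - derive (fun y => \sum_(s : S) \sum_(a : A) d y s a * delta y s a) th (ebasis R i).
    rewrite (@Dsum _ _ _ _ _ _ (fun s y => \sum_(a : A) d y s a * delta y s a)); last first.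
      by move=> s; apply: dsum => a _; apply: DD.
    rewrite -sumrN; apply: eq_bigr => s _.
    rewrite (@Dsum _ _ _ _ _ _ (fun a y => d y s a * delta y s a)) // -sumrN; apply: eq_bigr => a _.
    have dpos : d th s a != 0.
      rewrite /d (dvis_eq _ _ _ _ _ _ HP0 HP1 Hmu0 Hmu1 hg0 hg1 _ (hp0 th) (hpi1 th)).
      rewrite gt_eqF // mulr_gt0 ?subr_gt0 // mulr_gt0 //.
      exact: (rb_pos _ _ _ _ _ _ HP0 HP1 Hmu0 Hmu1 hg0 hg1 _ (hp0 th) (hpi1 th)).
    by rewrite mulVf // mulr1 DOpp.
  by rewrite opprK.
have E : Jtrue = (fun y => Jpi gamma mu0 (pi y) q +
            \sum_(s : S) \sum_(a : A) d y s a * delta y s a).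
  apply/funext => y; rewrite /Jtrue.
  exact: (key _ _ _ _ _ _ HP0 HP1 Hmu0 Hmu1 hg0 hg1 _ (hp0 y) (hpi1 y) q r).
rewrite E DAdd //.
exact: (dJ _ _ _ _ _ _ _ _ _ (dpi (ebasis R i)) q).
Qed.
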